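(* Let $n\ge 4$ and for each $i\in[n]$ let $X_i$ be uniformly distributed on $[0,i]$, with arbitrary joint distribution. Then $$ \mathbb{E}\Big[\max\Big\{|A|: A\subset[n],\ \sum_{i\in A}X_i\le 1\Big\}\Big]\le (2H_n)^{1/2}, $$ where $H_n=\sum_{i=1}^n 1/i$ is the $n$-th harmonic number. *)

(* Defs.v *)
From Stdlib Require Import Reals Lra List.
Import ListNotations.
Open Scope R_scope.

Definition sigma_algebra {Omega : Type} (F : (Omega -> Prop) -> Prop) : Prop :=
  F (fun _ => True) /\
  (forall A, F A -> F (fun w => ~ A w)) /\
  (forall A : nat -> Omega -> Prop,
      (forall k, F (A k)) -> F (fun w => exists k, A k w)).

Definition prob_space {Omega : Type} (F : (Omega -> Prop) -> Prop)
    (P : (Omega -> Prop) -> R) : Prop :=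
  sigma_algebra F /\
  (forall A, F A -> 0 <= P A) /\
  P (fun _ => True) = 1 /\
  (forall A : nat -> Omega -> Prop,
      (forall k, F (A k)) ->
      (forall j k, j <> k -> forall w, A j w -> A k w -> False) ->
      Un_cv (fun N => sum_f_R0 (fun k => P (A k)) N)
            (P (fun w => exists k, A k w))).

Definition uniform_on {Omega : Type} (F : (Omega -> Prop) -> Prop)
    (P : (Omega -> Prop) -> R) (X : Omega -> R) (a : R) : Prop :=
  forall t : R,
    F (fun w => X w <= t) /\
    P (fun w => X w <= t) = Rmin 1 (Rmax 0 (t / a)).

Definition subset_of_range (n : nat) (A : list nat) : Prop :=
  NoDup A /\ (forall i, In i A -> (1 <= i <= n)%nat).

Definition sum_over {Omega : Type} (X : nat -> Omega -> R) (A : list nat)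
    (w : Omega) : R :=
  fold_right (fun i s => X i w + s) 0 A.

Definition max_card_ge {Omega : Type} (n : nat) (X : nat -> Omega -> R)
    (k : nat) (w : Omega) : Prop :=
  exists A, subset_of_range n A /\ length A = k /\ sum_over X A w <= 1.

Definition max_card_eq {Omega : Type} (n : nat) (X : nat -> Omega -> R)
    (k : nat) (w : Omega) : Prop :=
  max_card_ge n X k w /\ ~ max_card_ge n X (S k) w.

(* Expectation of the {0..n}-valued random variable max{|A| : ...}:
   sum_{k=0}^{n} k * P(max = k). *)
Definition expected_max_card {Omega : Type} (P : (Omega -> Prop) -> R)
    (n : nat) (X : nat -> Omega -> R) : R :=
  sum_f_R0 (fun k => INR k * P (max_card_eq n X k)) n.

Definition harmonic (n : nat) : R :=
  sum_f_R0 (fun j => / INR (S j)) (pred n).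

(* Main.v *)
Require Import Defs.
From Stdlib Require Import Reals Lra Lia List ZArith ClassicalEpsilon Classical FunctionalExtensionality PropExtensionality.
Import ListNotations.
Open Scope R_scope.

Lemma pred_ext {Omega : Type} (A B : Omega -> Prop) :
  (forall w, A w <-> B w) -> A = B.
Proof.
  intro H; apply functional_extensionality; intro w;
  apply propositional_extensionality; apply H.
Qed.

Lemma F_ext {Omega : Type} (F : (Omega -> Prop) -> Prop) (A B : Omega -> Prop) :
  F A -> (forall w, A w <-> B w) -> F B.
Proof. intros HA H; rewrite <- (pred_ext A B H); exact HA. Qed.



Lemma F_not {Omega : Type} (F : (Omega -> Prop) -> Prop) A :
  sigma_algebra F -> F A -> F (fun w => ~ A w).
Proof. intros (_&H&_) HA; apply H; exact HA. Qed.

Lemma F_True {Omega : Type} (F : (Omega -> Prop) -> Prop) :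
  sigma_algebra F -> F (fun _ => True).
Proof. intros (H&_&_); exact H. Qed.

Lemma F_False {Omega : Type} (F : (Omega -> Prop) -> Prop) :
  sigma_algebra F -> F (fun _ => False).
Proof.
  intros HS; apply (F_ext F (fun w => ~ True)). apply F_not; auto. apply F_True; auto.
  intro w; tauto.
Qed.

Lemma F_ex {Omega : Type} (F : (Omega -> Prop) -> Prop) (A : nat -> Omega -> Prop) :
  sigma_algebra F -> (forall k, F (A k)) -> F (fun w => exists k, A k w).
Proof. intros (_&_&H) HA; apply H; exact HA. Qed.

Lemma F_or {Omega : Type} (F : (Omega -> Prop) -> Prop) A B :
  sigma_algebra F -> F A -> F B -> F (fun w => A w \/ B w).
Proof.
  intros HS HA HB.
  apply (F_ext F (fun w => exists k, (match k with 0 => A | _ => B end) w)).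
  - apply F_ex; auto. intros [|k]; auto.
  - intro w; split. intros [[|k] H]; auto. intros [H|H]. exists 0%nat; auto. exists 1%nat; auto.
Qed.

Lemma F_and {Omega : Type} (F : (Omega -> Prop) -> Prop) A B :
  sigma_algebra F -> F A -> F B -> F (fun w => A w /\ B w).
Proof.
  intros HS HA HB.
  apply (F_ext F (fun w => ~ (~ A w \/ ~ B w))).
  - apply F_not; auto; apply F_or; auto; apply F_not; auto.
  - intro w; tauto.
Qed.

Lemma F_all {Omega : Type} (F : (Omega -> Prop) -> Prop) (A : nat -> Omega -> Prop) :
  sigma_algebra F -> (forall k, F (A k)) -> F (fun w => forall k, A k w).
Proof.
  intros HS HA.
  apply (F_ext F (fun w => ~ exists k, ~ A k w)).
  - apply F_not; auto; apply F_ex; auto; intro k; apply F_not; auto.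
  - intro w; split. intros H k. apply NNPP; intro H'; apply H; eauto.
    intros H [k Hk]; auto.
Qed.

Lemma F_cond {Omega : Type} (F : (Omega -> Prop) -> Prop) (Q : Prop) A :
  sigma_algebra F -> (Q -> F A) -> F (fun w => Q /\ A w).
Proof.
  intros HS H. destruct (classic Q) as [q|q].
  - apply (F_ext F A); auto. intro w; tauto.
  - apply (F_ext F (fun _ => False)). apply F_False; auto. intro w; tauto.
Qed.

Lemma P_False {Omega : Type} F (P : (Omega -> Prop) -> R) :
  prob_space F P -> P (fun _ => False) = 0.
Proof.
  intros (HS&Hpos&H1&Hadd).
  set (p := P (fun _ => False)).
  assert (Hc := Hadd (fun _ _ => False) (fun _ => F_False F HS) (fun j k _ w a b => a)).
  assert (E : (fun w : Omega => exists _ : nat, False) = fun _ => False).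
  { apply pred_ext; intro w; split; [intros [_ f]; exact f| intro f; destruct f]. }
  cbv beta in Hc. rewrite E in Hc. fold p in Hc.
  assert (Hs : forall N, sum_f_R0 (fun _ => p) N = INR (S N) * p).
  { induction N. simpl; ring. rewrite tech5, IHN. rewrite (S_INR (S N)). ring. }
  destruct (Req_dec p 0) as [|Hp]; auto. exfalso.
  assert (Hap : 0 < Rabs p) by (apply Rabs_pos_lt; auto).
  destruct (Hc (Rabs p / 2)) as [N HN]. lra.
  specialize (HN (S N) ltac:(lia)). unfold Rdist in HN. rewrite Hs in HN.
  replace (INR (S (S N)) * p - p) with (INR (S N) * p) in HN by (rewrite (S_INR (S N)); ring).
  rewrite Rabs_mult, Rabs_right in HN by (apply Rle_ge, pos_INR).
  rewrite S_INR in HN. assert (0 <= INR N) by apply pos_INR. nra.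
Qed.

Lemma P_split {Omega : Type} F (P : (Omega -> Prop) -> R) G D :
  prob_space F P -> F G -> F D ->
  P G = P (fun w => G w /\ D w) + P (fun w => G w /\ ~ D w).
Proof.
  intros HP HG HD. pose proof HP as (HS&Hpos&H1&Hadd).
  set (A := fun k w => match k with 0%nat => G w /\ D w | 1%nat => G w /\ ~ D w | _ => False end).
  assert (HA : forall k, F (A k)).
  { intros [|[|k]]; unfold A. apply F_and; auto. apply F_and; auto. apply F_not; auto. apply F_False; auto. }
  assert (Hd : forall j k, j <> k -> forall w, A j w -> A k w -> False).
  { intros [|[|j]] [|[|k]] Hjk w; unfold A; simpl; try tauto; lia. }
  assert (Hc := Hadd A HA Hd).
  assert (E : (fun w => exists k, A k w) = G).
  { apply pred_ext; intro w; split.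
    - intros [[|[|k]] Hk]; unfold A in Hk; tauto.
    - intro g. destruct (classic (D w)). exists 0%nat; unfold A; tauto. exists 1%nat; unfold A; tauto. }
  rewrite E in Hc.
  assert (Hs : forall N, sum_f_R0 (fun k => P (A k)) (S N) = P (A 0%nat) + P (A 1%nat)).
  { induction N. simpl; ring. rewrite tech5, IHN. unfold A at 3. rewrite (P_False F P HP). ring. }
  symmetry. apply (UL_sequence (fun N => sum_f_R0 (fun k => P (A k)) N)); auto.
  intros eps Heps. exists 1%nat. intros m Hm. destruct m as [|m]. lia.
  rewrite Hs. unfold Rdist. unfold A. rewrite Rminus_diag, Rabs_R0. auto.
Qed.

Lemma P_mono {Omega : Type} F (P : (Omega -> Prop) -> R) A B :
  prob_space F P -> F A -> F B -> P (fun w => A w /\ B w) <= P A.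
Proof.
  intros HP HA HB. pose proof HP as (HS&Hpos&_).
  rewrite (P_split F P A B HP HA HB).
  assert (0 <= P (fun w => A w /\ ~ B w)). apply Hpos. apply F_and; auto. apply F_not; auto.
  lra.
Qed.

Lemma P_subadd {Omega : Type} F (P : (Omega -> Prop) -> R) A B :
  prob_space F P -> F A -> F B -> P (fun w => A w \/ B w) <= P A + P B.
Proof.
  intros HP HA HB. pose proof HP as (HS&Hpos&_).
  rewrite (P_split F P (fun w => A w \/ B w) A HP); [|apply F_or;auto|auto].
  rewrite (pred_ext (fun w => (A w \/ B w) /\ A w) A) by (intro; tauto).
  rewrite (pred_ext (fun w => (A w \/ B w) /\ ~ A w) (fun w => B w /\ ~ A w)) by (intro; tauto).
  pose proof (P_mono F P B (fun w => ~ A w) HP HB (F_not F A HS HA)). lra.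
Qed.

Definition mble {Omega : Type} (F : (Omega -> Prop) -> Prop) (f : Omega -> R) :=
  forall t, F (fun w => f w <= t).

Lemma mble_const {Omega : Type} F (c : R) :
  sigma_algebra F -> @mble Omega F (fun _ => c).
Proof.
  intros HS t. destruct (Rle_dec c t).
  - apply (F_ext F (fun _ => True)). apply F_True; auto. intro; tauto.
  - apply (F_ext F (fun _ => False)). apply F_False; auto. intro; tauto.
Qed.

Lemma mble_scale {Omega : Type} F (f : Omega -> R) a s :
  mble F f -> 0 < a -> F (fun w => f w * a <= s).
Proof.
  intros Hf Ha. apply (F_ext F (fun w => f w <= s / a)); auto.
  intro w; split; intro H.
  - apply Rmult_le_compat_r with (r := a) in H; [|lra].
    replace (s / a * a) with s in H by (field; lra). exact H.
  - apply Rmult_le_reg_r with a; auto. replace (s / a * a) with s by (field; lra). exact H.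
Qed.

Lemma int_approx (r : R) : exists k : nat,
  (r < INR k /\ INR k <= r + 1) \/ (r < - INR k /\ - INR k <= r + 1).
Proof.
  destruct (archimed r) as [H1 H2].
  destruct (Z_le_gt_dec 0 (up r)) as [Hz|Hz].
  - exists (Z.to_nat (up r)). left. rewrite INR_IZR_INZ, Z2Nat.id by auto. lra.
  - exists (Z.to_nat (- up r)). right. rewrite INR_IZR_INZ, Z2Nat.id by lia.
    rewrite opp_IZR. lra.
Qed.

Lemma mble_plus {Omega : Type} F (f g : Omega -> R) :
  sigma_algebra F -> mble F f -> mble F g -> mble F (fun w => f w + g w).
Proof.
  intros HS Hf Hg t.
  set (a := fun N : nat => INR N + 1).
  assert (Ha : forall N, 0 < a N) by (intro N; unfold a; pose proof (pos_INR N); lra).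
  apply (F_ext F (fun w => forall N, exists k,
     (f w * a N <= INR k /\ g w * a N <= t * a N - INR k + 1) \/
     (f w * a N <= - INR k /\ g w * a N <= t * a N + INR k + 1))).
  - apply F_all; auto; intro N; apply F_ex; auto; intro k.
    apply F_or; auto; apply F_and; auto; apply mble_scale; auto.
  - intro w; split.
    + intro H. apply Rnot_lt_le. intro Hlt.
      destruct (INR_unbounded (/ (f w + g w - t))) as [N HN].
      destruct (H N) as [k Hk].
      assert (Hsum : (f w + g w) * a N <= t * a N + 1) by (destruct Hk; nra).
      assert (Hd : 0 < f w + g w - t) by lra.
      assert (INR N * (f w + g w - t) > 1).
      { apply Rmult_gt_compat_r with (r := f w + g w - t) in HN; [|lra].
        rewrite Rinv_l in HN by lra. lra. }
      unfold a in Hsum. nra.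
    + intros H N. destruct (int_approx (f w * a N)) as [k Hk].
      assert (g w * a N <= t * a N - f w * a N).
      { pose proof (Ha N). nra. }
      exists k. destruct Hk as [Hk|Hk]; [left|right]; lra.
Qed.

Lemma F_ge_gen {Omega : Type} F (X : nat -> Omega -> R) (n : nat) :
  sigma_algebra F -> (forall i, (1 <= i <= n)%nat -> mble F (X i)) ->
  forall k (Q : list nat -> Prop) (f : Omega -> R), mble F f ->
  (forall A, Q A -> length A = k /\ forall i, In i A -> (1 <= i <= n)%nat) ->
  F (fun w => exists A, Q A /\ f w + sum_over X A w <= 1).
Proof.
  intros HS HX k. induction k as [|k IH]; intros Q f Hf HQ.
  - apply (F_ext F (fun w => Q [] /\ f w <= 1)).
    + apply F_cond; auto.
    + intro w; split.
      * intros [q Hw]. exists []. unfold sum_over; simpl. split; auto; lra.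
      * intros [A [q Hw]]. destruct (HQ A q) as [HL _]. destruct A; [|discriminate].
        unfold sum_over in Hw; simpl in Hw. split; auto; lra.
  - apply (F_ext F (fun w => exists i, (1 <= i <= n)%nat /\
        (exists A', Q (i :: A') /\ (f w + X i w) + sum_over X A' w <= 1))).
    + apply F_ex; auto. intro i. apply F_cond; auto. intro Hi.
      apply (IH (fun A' => Q (i :: A')) (fun w => f w + X i w)).
      * apply mble_plus; auto.
      * intros A' HA'. destruct (HQ _ HA') as [HL Hin]. simpl in HL. split. lia.
        intros j Hj; apply Hin; simpl; auto.
    + intro w; split.
      * intros [i [Hi [A' [q Hw]]]]. exists (i :: A'). split; auto.
        change (sum_over X (i :: A') w) with (X i w + sum_over X A' w). lra.
      * intros [A [q Hw]]. destruct (HQ A q) as [HL Hin]. destruct A as [|i A']; [discriminate|].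
        exists i. split. apply Hin; simpl; auto. exists A'. split; auto.
        change (sum_over X (i :: A') w) with (X i w + sum_over X A' w) in Hw. lra.
Qed.

Lemma F_ge {Omega : Type} F (X : nat -> Omega -> R) (n k : nat) :
  sigma_algebra F -> (forall i, (1 <= i <= n)%nat -> mble F (X i)) ->
  F (max_card_ge n X k).
Proof.
  intros HS HX.
  apply (F_ext F (fun w => exists A, (subset_of_range n A /\ length A = k) /\ 0 + sum_over X A w <= 1)).
  - apply (F_ge_gen F X n HS HX k); auto. apply mble_const; auto.
    intros A [[_ H1] H2]; auto.
  - intro w; unfold max_card_ge; split.
    + intros [A [[H1 H2] H3]]. exists A; split; [|split]; auto; lra.
    + intros [A [H1 [H2 H3]]]. exists A; split; [split|]; auto; lra.
Qed.

Lemma F_eq {Omega : Type} F (X : nat -> Omega -> R) (n k : nat) :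
  sigma_algebra F -> (forall i, (1 <= i <= n)%nat -> mble F (X i)) ->
  F (max_card_eq n X k).
Proof.
  intros HS HX. unfold max_card_eq. apply F_and; auto. apply F_ge; auto.
  apply F_not; auto. apply F_ge; auto.
Qed.

Definition ind {Omega : Type} (E : Omega -> Prop) (w : Omega) : R :=
  if excluded_middle_informative (E w) then 1 else 0.

Definition SF {Omega : Type} (L : list (R * (Omega -> Prop))) (w : Omega) : R :=
  fold_right (fun p s => fst p * ind (snd p) w + s) 0 L.

Definition EP {Omega : Type} (P : (Omega -> Prop) -> R) (L : list (R * (Omega -> Prop)))
  (G : Omega -> Prop) : R :=
  fold_right (fun p s => fst p * P (fun w => snd p w /\ G w) + s) 0 L.

Lemma SF_app {Omega : Type} (L1 L2 : list (R * (Omega -> Prop))) w :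
  SF (L1 ++ L2) w = SF L1 w + SF L2 w.
Proof. induction L1; simpl. unfold SF; simpl; ring. unfold SF in *; simpl. rewrite IHL1; ring. Qed.

Lemma EP_app {Omega : Type} P (L1 L2 : list (R * (Omega -> Prop))) G :
  EP P (L1 ++ L2) G = EP P L1 G + EP P L2 G.
Proof. induction L1; simpl. unfold EP; simpl; ring. unfold EP in *; simpl. rewrite IHL1; ring. Qed.

Lemma EP_split {Omega : Type} F P (L : list (R * (Omega -> Prop))) G D :
  prob_space F P -> Forall (fun p => F (snd p)) L -> F G -> F D ->
  EP P L G = EP P L (fun w => G w /\ D w) + EP P L (fun w => G w /\ ~ D w).
Proof.
  intros HP HL HG HD. pose proof HP as (HS&_).
  induction HL as [|[d E] L HE HL IH]; unfold EP in *; simpl in *. ring.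
  rewrite IH. rewrite (P_split F P (fun w => E w /\ G w) D HP); [|apply F_and; auto|auto].
  rewrite (pred_ext (fun w => (E w /\ G w) /\ D w) (fun w => E w /\ G w /\ D w)) by (intro; tauto).
  rewrite (pred_ext (fun w => (E w /\ G w) /\ ~ D w) (fun w => E w /\ G w /\ ~ D w)) by (intro; tauto).
  ring.
Qed.

Lemma main_sf {Omega : Type} F P (L : list (R * (Omega -> Prop))) :
  prob_space F P -> Forall (fun p => F (snd p)) L ->
  forall c G, F G -> (forall w, G w -> 0 <= c + SF L w) -> 0 <= c * P G + EP P L G.
Proof.
  intros HP HL. pose proof HP as (HS&Hpos&_).
  induction HL as [|[d D] L HD HL IH]; intros c G HG Hw; try simpl in HD.
  - unfold EP; simpl. destruct (classic (exists w, G w)) as [[w g]|Hn].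
    + specialize (Hw w g). unfold SF in Hw; simpl in Hw. specialize (Hpos G HG). nra.
    + rewrite (pred_ext G (fun _ => False)) by (intro w; split; [intro g; apply Hn; eauto|tauto]).
      rewrite (P_False F P HP). lra.
  - assert (H1 := IH (c + d) (fun w => G w /\ D w) ltac:(apply F_and; auto)).
    assert (H2 := IH c (fun w => G w /\ ~ D w) ltac:(apply F_and; auto; apply F_not; auto)).
    assert (E1 : EP P ((d, D) :: L) G = d * P (fun w => G w /\ D w) + EP P L G).
    { unfold EP; simpl. rewrite (pred_ext (fun w => D w /\ G w) (fun w => G w /\ D w)) by (intro; tauto). auto. }
    rewrite E1, (EP_split F P L G D HP HL HG HD), (P_split F P G D HP HG HD).
    assert (A1 : 0 <= (c + d) * P (fun w => G w /\ D w) + EP P L (fun w => G w /\ D w)).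
    { apply H1. intros w [g dw]. specialize (Hw w g). unfold SF in Hw; simpl in Hw.
      unfold ind at 1 in Hw. destruct (excluded_middle_informative (D w)); [|tauto].
      unfold SF. lra. }
    assert (A2 : 0 <= c * P (fun w => G w /\ ~ D w) + EP P L (fun w => G w /\ ~ D w)).
    { apply H2. intros w [g dw]. specialize (Hw w g). unfold SF in Hw; simpl in Hw.
      unfold ind at 1 in Hw. destruct (excluded_middle_informative (D w)); [tauto|].
      unfold SF. lra. }
    nra.
Qed.

Fixpoint LM {Omega : Type} (n : nat) (X : nat -> Omega -> R) (m : nat) : list (R * (Omega -> Prop)) :=
  match m with
  | O => [(0, max_card_eq n X 0)]
  | S m' => (- INR (S m'), max_card_eq n X (S m')) :: LM n X m'
  end.

Fixpoint LJ {Omega : Type} (X : nat -> Omega -> R) (c0 : R) (N i J : nat) : list (R * (Omega -> Prop)) :=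
  match J with
  | O => []
  | S j => (/ INR N, fun w => X i w <= INR (S j) / (c0 * INR N)) :: LJ X c0 N i j
  end.

Fixpoint LX {Omega : Type} (X : nat -> Omega -> R) (c0 : R) (N m : nat) : list (R * (Omega -> Prop)) :=
  match m with
  | O => []
  | S m' => LJ X c0 N (S m') N ++ LX X c0 N m'
  end.

Definition gsum (g : nat -> R) (A : list nat) : R := fold_right (fun i s => g i + s) 0 A.

Lemma gsum_app g A B : gsum g (A ++ B) = gsum g A + gsum g B.
Proof. induction A; simpl. unfold gsum; simpl; ring. unfold gsum in *; simpl; rewrite IHA; ring. Qed.

Lemma ind_nonneg {Omega : Type} (E : Omega -> Prop) w : 0 <= ind E w <= 1.
Proof. unfold ind; destruct (excluded_middle_informative (E w)); lra. Qed.

Lemma SF_LJ_nonneg {Omega : Type} (X : nat -> Omega -> R) c0 N i J w :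
  (0 < N)%nat -> 0 <= SF (LJ X c0 N i J) w.
Proof.
  intro HN. assert (0 < / INR N) by (apply Rinv_0_lt_compat, lt_0_INR; auto).
  induction J. unfold SF; simpl; lra.
  change (SF (LJ X c0 N i (S J)) w) with
      (/ INR N * ind (fun w => X i w <= INR (S J) / (c0 * INR N)) w + SF (LJ X c0 N i J) w).
  pose proof (ind_nonneg (fun w => X i w <= INR (S J) / (c0 * INR N)) w). nra.
Qed.

Lemma SF_LJ_bound {Omega : Type} (X : nat -> Omega -> R) c0 N i w :
  (0 < N)%nat -> 0 < c0 -> forall J, INR J <= INR N * SF (LJ X c0 N i J) w + c0 * INR N * X i w ->
  True.
Proof. auto. Qed.

Lemma SF_LJ_bound' {Omega : Type} (X : nat -> Omega -> R) c0 N i w :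
  (0 < N)%nat -> 0 < c0 -> 0 < X i w ->
  forall J, INR J <= INR N * SF (LJ X c0 N i J) w + c0 * INR N * X i w.
Proof.
  intros HN Hc Hx. assert (HN' : 0 < INR N) by (apply lt_0_INR; auto).
  induction J.
  - simpl. unfold SF; simpl. pose proof (Rmult_lt_0_compat _ _ Hc HN'). nra.
  - change (SF (LJ X c0 N i (S J)) w) with
      (/ INR N * ind (fun w => X i w <= INR (S J) / (c0 * INR N)) w + SF (LJ X c0 N i J) w).
    unfold ind. destruct (excluded_middle_informative _) as [H|H].
    + rewrite S_INR. replace (INR N * (/ INR N * 1 + SF (LJ X c0 N i J) w))
        with (1 + INR N * SF (LJ X c0 N i J) w) by (field; lra). lra.
    + apply Rnot_le_lt in H. pose proof (SF_LJ_nonneg X c0 N i J w HN).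
      assert (INR (S J) < c0 * INR N * X i w).
      { apply Rmult_lt_compat_r with (r := c0 * INR N) in H; [|nra].
        replace (INR (S J) / (c0 * INR N) * (c0 * INR N)) with (INR (S J)) in H by (field; nra). lra. }
      assert (0 <= INR N * SF (LJ X c0 N i J) w) by nra. lra.
Qed.

Lemma one_le_g {Omega : Type} (X : nat -> Omega -> R) c0 N i w :
  (0 < N)%nat -> 0 < c0 -> 0 < X i w -> 1 <= SF (LJ X c0 N i N) w + c0 * X i w.
Proof.
  intros HN Hc Hx. pose proof (SF_LJ_bound' X c0 N i w HN Hc Hx N).
  assert (HN' : 0 < INR N) by (apply lt_0_INR; auto).
  apply Rmult_le_reg_l with (INR N); auto. nra.
Qed.

Lemma SF_LX_nonneg {Omega : Type} (X : nat -> Omega -> R) c0 N m w :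
  (0 < N)%nat -> 0 <= SF (LX X c0 N m) w.
Proof.
  intro HN; induction m; simpl. unfold SF; simpl; lra.
  rewrite SF_app. pose proof (SF_LJ_nonneg X c0 N (S m) N w HN). lra.
Qed.

Lemma sum_sub {Omega : Type} (X : nat -> Omega -> R) c0 N w :
  (0 < N)%nat -> forall m A, NoDup A -> (forall i, In i A -> (1 <= i <= m)%nat) ->
  gsum (fun i => SF (LJ X c0 N i N) w) A <= SF (LX X c0 N m) w.
Proof.
  intros HN m. induction m; intros A HA Hin.
  - destruct A as [|a A]. unfold gsum, SF; simpl; lra.
    specialize (Hin a (or_introl eq_refl)). lia.
  - simpl LX. rewrite SF_app. destruct (in_dec Nat.eq_dec (S m) A) as [Hi|Hi].
    + destruct (in_split _ _ Hi) as [l1 [l2 E]]. subst A.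
      rewrite gsum_app. simpl. unfold gsum at 2. simpl. fold (gsum (fun i => SF (LJ X c0 N i N) w) l2).
      assert (H := IHm (l1 ++ l2) (NoDup_remove_1 _ _ _ HA)).
      rewrite gsum_app in H.
      assert (Hn := NoDup_remove_2 _ _ _ HA).
      assert (H' : gsum (fun i => SF (LJ X c0 N i N) w) l1 + gsum (fun i => SF (LJ X c0 N i N) w) l2
                   <= SF (LX X c0 N m) w).
      { apply H. intros i Hi'. assert (In i (l1 ++ S m :: l2)).
        { apply in_app_or in Hi'; apply in_or_app; destruct Hi'; [left|right; right]; auto. }
        specialize (Hin i H0). assert (i <> S m) by (intro; subst; auto). lia. }
      lra.
    + pose proof (SF_LJ_nonneg X c0 N (S m) N w HN).
      assert (gsum (fun i => SF (LJ X c0 N i N) w) A <= SF (LX X c0 N m) w).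
      { apply IHm; auto. intros i Hi'. specialize (Hin i Hi'). assert (i <> S m) by (intro; subst; auto). lia. }
      lra.
Qed.

Lemma len_bound {Omega : Type} (X : nat -> Omega -> R) c0 N w :
  (0 < N)%nat -> 0 < c0 -> forall A, (forall i, In i A -> 0 < X i w) ->
  INR (length A) <= gsum (fun i => SF (LJ X c0 N i N) w) A + c0 * sum_over X A w.
Proof.
  intros HN Hc A. induction A as [|a A IH]; intro Hp.
  - unfold gsum, sum_over; simpl; lra.
  - change (length (a :: A)) with (S (length A)). rewrite S_INR.
    change (sum_over X (a :: A) w) with (X a w + sum_over X A w).
    unfold gsum; simpl; fold (gsum (fun i => SF (LJ X c0 N i N) w) A).
    pose proof (one_le_g X c0 N a w HN Hc (Hp a (or_introl eq_refl))).
    assert (INR (length A) <= gsum (fun i => SF (LJ X c0 N i N) w) A + c0 * sum_over X A w).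
    { apply IH; intros; apply Hp; simpl; auto. }
    lra.
Qed.

Lemma ge_down {Omega : Type} n (X : nat -> Omega -> R) w j :
  (forall i, (1 <= i <= n)%nat -> 0 < X i w) -> max_card_ge n X (S j) w -> max_card_ge n X j w.
Proof.
  intros Hp [A [[HA Hin] [HL Hs]]]. destruct A as [|a A]; [discriminate|].
  exists A. simpl in HL. inversion HA; subst. split; [split|split]; auto.
  - intros i Hi; apply Hin; simpl; auto.
  - change (sum_over X (a :: A) w) with (X a w + sum_over X A w) in Hs.
    pose proof (Hp a (Hin a (or_introl eq_refl))). lra.
Qed.

Lemma ge_le {Omega : Type} n (X : nat -> Omega -> R) w :
  (forall i, (1 <= i <= n)%nat -> 0 < X i w) -> forall k j, (j <= k)%nat ->
  max_card_ge n X k w -> max_card_ge n X j w.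
Proof.
  intros Hp k. induction k; intros j Hj H.
  - replace j with 0%nat by lia; auto.
  - destruct (Nat.eq_dec j (S k)). subst; auto.
    apply IHk. lia. apply ge_down; auto.
Qed.

Lemma eq_unique {Omega : Type} n (X : nat -> Omega -> R) w :
  (forall i, (1 <= i <= n)%nat -> 0 < X i w) -> forall k k',
  max_card_eq n X k w -> max_card_eq n X k' w -> k = k'.
Proof.
  intros Hp k k' [H1 H2] [H3 H4].
  destruct (Nat.lt_total k k') as [Hl|[Hl|Hl]]; auto.
  - exfalso; apply H2. apply (ge_le n X w Hp k'); auto.
  - exfalso; apply H4. apply (ge_le n X w Hp k); auto.
Qed.

Lemma sum_none {Omega : Type} (E : nat -> Omega -> Prop) w m :
  (forall k, (k <= m)%nat -> ~ E k w) -> sum_f_R0 (fun k => INR k * ind (E k) w) m = 0.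
Proof.
  induction m; intro H.
  - simpl; ring.
  - rewrite tech5; cbv beta. rewrite IHm by (intros; apply H; lia). unfold ind.
    destruct (excluded_middle_informative (E (S m) w)). exfalso; apply (H (S m)); auto. ring.
Qed.

Lemma sum_one {Omega : Type} (E : nat -> Omega -> Prop) w m k0 :
  (forall k k', E k w -> E k' w -> k = k') -> (k0 <= m)%nat -> E k0 w ->
  sum_f_R0 (fun k => INR k * ind (E k) w) m = INR k0.
Proof.
  intros Hu. induction m; intros Hk H0.
  - replace k0 with 0%nat by lia. simpl; ring.
  - rewrite tech5. cbv beta.
    destruct (Nat.eq_dec k0 (S m)).
    + subst. rewrite sum_none. unfold ind.
      destruct (excluded_middle_informative (E (S m) w)); [|tauto]. ring.
      intros k Hk' Ek. specialize (Hu _ _ Ek H0). lia.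
    + rewrite IHm by (auto; lia). unfold ind.
      destruct (excluded_middle_informative (E (S m) w)) as [e|e].
      * specialize (Hu _ _ e H0). lia.
      * ring.
Qed.

Lemma sum_bound {Omega : Type} (E : nat -> Omega -> Prop) w m B :
  (forall k k', E k w -> E k' w -> k = k') -> (forall k, (k <= m)%nat -> E k w -> INR k <= B) -> 0 <= B ->
  sum_f_R0 (fun k => INR k * ind (E k) w) m <= B.
Proof.
  intros Hu Hb HB. destruct (classic (exists k0, (k0 <= m)%nat /\ E k0 w)) as [[k0 [H1 H2]]|Hn].
  - rewrite (sum_one E w m k0 Hu H1 H2). auto.
  - rewrite sum_none; auto. intros k Hk Ek; apply Hn; eauto.
Qed.

Lemma SF_LM {Omega : Type} n (X : nat -> Omega -> R) w m :
  SF (LM n X m) w = - sum_f_R0 (fun k => INR k * ind (max_card_eq n X k) w) m.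
Proof.
  induction m; unfold SF in *; simpl in *. ring.
  rewrite IHm. destruct m; simpl; ring.
Qed.

Lemma P_full {Omega : Type} F P (E G : Omega -> Prop) :
  prob_space F P -> F E -> F G -> P (fun w => ~ G w) = 0 -> P (fun w => E w /\ G w) = P E.
Proof.
  intros HP HE HG H0. pose proof HP as (HS&Hpos&_).
  rewrite (P_split F P E G HP HE HG).
  assert (0 <= P (fun w => E w /\ ~ G w)) by (apply Hpos; apply F_and; auto; apply F_not; auto).
  assert (P (fun w => E w /\ ~ G w) <= 0).
  { rewrite <- H0. rewrite (pred_ext (fun w => E w /\ ~ G w) (fun w => ~ G w /\ E w)) by (intro; tauto).
    apply P_mono with F; auto. apply F_not; auto. }
  lra.
Qed.

Lemma EP_LM {Omega : Type} F P n (X : nat -> Omega -> R) G m :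
  prob_space F P -> (forall i, (1 <= i <= n)%nat -> mble F (X i)) -> F G ->
  P (fun w => ~ G w) = 0 ->
  EP P (LM n X m) G = - sum_f_R0 (fun k => INR k * P (max_card_eq n X k)) m.
Proof.
  intros HP HX HG H0. pose proof HP as (HS&_).
  induction m; unfold EP in *; cbn [LM fold_right fst snd].
  - rewrite (P_full F P); auto. simpl; ring. apply F_eq; auto.
  - rewrite IHm, tech5. rewrite (P_full F P); auto. ring. apply F_eq; auto.
Qed.

Lemma EP_LJ {Omega : Type} F P n (X : nat -> Omega -> R) G c0 N i :
  prob_space F P -> (forall i, (1 <= i <= n)%nat -> uniform_on F P (X i) (INR i)) -> F G ->
  P (fun w => ~ G w) = 0 -> (1 <= i <= n)%nat -> (0 < N)%nat -> 1 <= c0 ->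
  forall J, (J <= N)%nat ->
  EP P (LJ X c0 N i J) G = INR J * (INR J + 1) / (2 * c0 * INR N * INR N * INR i).
Proof.
  intros HP HU HG H0 Hi HN Hc. pose proof HP as (HS&_).
  assert (HN' : 0 < INR N) by (apply lt_0_INR; auto).
  assert (Hi' : 1 <= INR i) by (apply (le_INR 1); lia).
  induction J; intro HJ.
  - unfold EP; simpl; field. repeat split; lra.
  - change (EP P (LJ X c0 N i (S J)) G) with
      (/ INR N * P (fun w => X i w <= INR (S J) / (c0 * INR N) /\ G w) + EP P (LJ X c0 N i J) G).
    rewrite IHJ by lia. destruct (HU i Hi (INR (S J) / (c0 * INR N))) as [HF HPr].
    rewrite (P_full F P (fun w => X i w <= INR (S J) / (c0 * INR N))); auto.
    rewrite HPr.
    assert (HSJ : INR (S J) <= INR N) by (apply le_INR; auto).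
    assert (0 <= INR (S J)) by apply pos_INR.
    set (t := INR (S J) / (c0 * INR N) / INR i).
    assert (Ht0 : 0 <= t).
    { unfold t. apply Rmult_le_pos; [apply Rmult_le_pos|]; auto.
      left; apply Rinv_0_lt_compat; nra. left; apply Rinv_0_lt_compat; lra. }
    assert (Ht1 : t <= 1).
    { assert (Hpos : 0 < c0 * INR N * INR i) by (apply Rmult_lt_0_compat; [apply Rmult_lt_0_compat|]; lra).
      replace t with (INR (S J) / (c0 * INR N * INR i)) by (unfold t; field; repeat split; lra).
      apply Rmult_le_reg_r with (c0 * INR N * INR i); auto.
      unfold Rdiv. rewrite Rmult_assoc, Rinv_l, Rmult_1_r by lra.
      assert (INR N <= c0 * INR N) by nra.
      assert (c0 * INR N <= c0 * INR N * INR i) by nra. lra. }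
    rewrite Rmax_right by auto. rewrite Rmin_right by auto. unfold t.
    rewrite S_INR. field. repeat split; lra.
Qed.

Fixpoint Hm (m : nat) : R := match m with O => 0 | S m' => Hm m' + / INR (S m') end.

Lemma harmonic_Hm m : harmonic (S m) = Hm (S m).
Proof.
  induction m. unfold harmonic; simpl; ring.
  unfold harmonic in *. simpl pred in *. rewrite tech5, IHm. simpl Hm at 2. reflexivity.
Qed.

Lemma EP_LX {Omega : Type} F P n (X : nat -> Omega -> R) G c0 N :
  prob_space F P -> (forall i, (1 <= i <= n)%nat -> uniform_on F P (X i) (INR i)) -> F G ->
  P (fun w => ~ G w) = 0 -> (0 < N)%nat -> 1 <= c0 ->
  forall m, (m <= n)%nat ->
  EP P (LX X c0 N m) G = (INR N + 1) / (2 * c0 * INR N) * Hm m.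
Proof.
  intros HP HU HG H0 HN Hc. assert (HN' : 0 < INR N) by (apply lt_0_INR; auto).
  induction m; intro Hm'.
  - unfold EP; simpl; ring.
  - simpl LX. rewrite EP_app, IHm by lia.
    rewrite (EP_LJ F P n X G c0 N (S m)) by (auto; lia).
    change (Hm (S m)) with (Hm m + / INR (S m)). assert (0 < INR (S m)) by (apply lt_0_INR; lia). field. repeat split; lra.
Qed.

Lemma Forall_LX {Omega : Type} F P n (X : nat -> Omega -> R) c0 N :
  (forall i, (1 <= i <= n)%nat -> uniform_on F P (X i) (INR i)) ->
  forall m, (m <= n)%nat -> Forall (fun p => F (snd p)) (LX X c0 N m).
Proof.
  intros HU m. induction m; intro Hm'; simpl. constructor.
  apply Forall_app; split; [|apply IHm; lia].
  clear IHm. generalize N at 2. intro J. induction J as [|J IH]; simpl. constructor.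
  constructor. simpl. apply (HU (S m) ltac:(lia)). auto.
Qed.

Lemma Hm_mono m k : (m <= k)%nat -> Hm m <= Hm k.
Proof.
  induction 1. lra. change (Hm (S m0)) with (Hm m0 + / INR (S m0)).
  assert (0 < / INR (S m0)) by (apply Rinv_0_lt_compat, lt_0_INR; lia). lra.
Qed.

Lemma Hm4 : 2 <= Hm 4.
Proof.
  change (Hm 4) with (0 + / INR 1 + / INR 2 + / INR 3 + / INR 4).
  replace (INR 1) with 1 by (simpl; ring). replace (INR 2) with 2 by (simpl; ring).
  replace (INR 3) with 3 by (simpl; ring). replace (INR 4) with 4 by (simpl; ring).
  lra.
Qed.

Lemma Bad_lemma {Omega : Type} F P n (X : nat -> Omega -> R) :
  prob_space F P -> (forall i, (1 <= i <= n)%nat -> uniform_on F P (X i) (INR i)) ->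
  forall m, (m <= n)%nat ->
  F (fun w => exists i, (1 <= i <= m)%nat /\ X i w <= 0) /\
  P (fun w => exists i, (1 <= i <= m)%nat /\ X i w <= 0) = 0.
Proof.
  intros HP HU. pose proof HP as (HS&Hpos&_).
  induction m; intro Hm'.
  - rewrite (pred_ext (fun w => exists i, (1 <= i <= 0)%nat /\ X i w <= 0) (fun _ => False)) by (intro w; split; [intros [i [Hi _]]; lia | tauto]).
    split. apply F_False; auto. apply (P_False F P HP).
  - destruct IHm as [HF1 HP1]; [lia|].
    destruct (HU (S m) ltac:(lia) 0) as [HF2 HP2].
    rewrite (pred_ext (fun w => exists i, (1 <= i <= S m)%nat /\ X i w <= 0) (fun w => (exists i, (1 <= i <= m)%nat /\ X i w <= 0) \/ X (S m) w <= 0)).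
    + split. apply F_or; auto.
      pose proof (P_subadd F P _ _ HP HF1 HF2).
      assert (P (fun w => X (S m) w <= 0) = 0).
      { rewrite HP2. unfold Rdiv. rewrite Rmult_0_l. rewrite Rmax_left by lra. rewrite Rmin_right; lra. }
      assert (0 <= P (fun w => (exists i, (1 <= i <= m)%nat /\ X i w <= 0) \/ X (S m) w <= 0)).
      { apply Hpos. apply F_or; auto. }
      lra.
    + intro w; split.
      * intros [i [Hi Hx]]. destruct (Nat.eq_dec i (S m)). subst; auto. left; exists i; split; auto; lia.
      * intros [[i [Hi Hx]]|Hx]. exists i; split; auto; lia. exists (S m); split; auto; lia.
Qed.

Theorem mainTheorem5 :
  forall (Omega : Type) (F : (Omega -> Prop) -> Prop) (P : (Omega -> Prop) -> R)
         (n : nat) (X : nat -> Omega -> R),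
    prob_space F P ->
    (4 <= n)%nat ->
    (forall i : nat, (1 <= i <= n)%nat -> uniform_on F P (X i) (INR i)) ->
    expected_max_card P n X <= sqrt (2 * harmonic n).
Proof.
  intros Omega F P n X HP Hn HU. pose proof HP as (HS&Hpos&H1&_).
  assert (HX : forall i, (1 <= i <= n)%nat -> mble F (X i)).
  { intros i Hi t. apply (HU i Hi t). }
  set (G := fun w => forall i, (1 <= i <= n)%nat -> 0 < X i w).
  destruct (Bad_lemma F P n X HP HU n (le_n n)) as [HFB HPB].
  assert (HnG : forall w, ~ G w <-> exists i, (1 <= i <= n)%nat /\ X i w <= 0).
  { intro w; unfold G; split.
    - intro H. apply NNPP; intro H'. apply H. intros i Hi. apply Rnot_le_lt. intro Hx. apply H'; eauto.
    - intros [i [Hi Hx]] H. specialize (H i Hi). lra. }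
  assert (HG : F G).
  { apply (F_ext F (fun w => ~ exists i, (1 <= i <= n)%nat /\ X i w <= 0)).
    apply F_not; auto. intro w. rewrite <- HnG. tauto. }
  assert (H0 : P (fun w => ~ G w) = 0).
  { rewrite (pred_ext _ _ HnG). auto. }
  assert (HPG : P G = 1).
  { rewrite <- H1. rewrite (P_split F P (fun _ => True) G HP (F_True F HS) HG).
    rewrite (pred_ext (fun w => True /\ G w) G) by (intro; tauto).
    rewrite (pred_ext (fun w => True /\ ~ G w) (fun w => ~ G w)) by (intro; tauto).
    rewrite H0; ring. }
  set (H := harmonic n).
  assert (HH : 2 <= H).
  { unfold H. destruct n as [|n']; [lia|]. rewrite harmonic_Hm.
    pose proof (Hm_mono 4 (S n') Hn). pose proof Hm4. lra. }
  set (c0 := sqrt (H / 2)).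
  assert (Hc1 : 1 <= c0).
  { unfold c0. rewrite <- sqrt_1. apply sqrt_le_1_alt. lra. }
  assert (Hc2 : c0 * c0 = H / 2) by (unfold c0; apply sqrt_sqrt; lra).
  assert (Hsq : sqrt (2 * H) = 2 * c0).
  { rewrite <- (sqrt_square (2 * c0)) by lra. f_equal. nra. }
  fold H. rewrite Hsq.
  set (E := expected_max_card P n X).
  assert (Hbound : forall N, (0 < N)%nat -> E <= c0 + (INR N + 1) / (2 * c0 * INR N) * H).
  { intros N HN. assert (HN' : 0 < INR N) by (apply lt_0_INR; auto).
    set (L := LM n X n ++ LX X c0 N n).
    assert (HL : Forall (fun p => F (snd p)) L).
    { unfold L. apply Forall_app; split.
      - assert (forall m, Forall (fun p => F (snd p)) (LM n X m)).
        { intro m; induction m; simpl; constructor; simpl; auto; apply F_eq; auto. }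
        auto.
      - apply (Forall_LX F P n X c0 N HU n (le_n n)). }
    assert (Hmain := main_sf F P L HP HL c0 G HG).
    assert (Hw : forall w, G w -> 0 <= c0 + SF L w).
    { intros w Gw. unfold L. rewrite SF_app, SF_LM.
      assert (Hb : sum_f_R0 (fun k => INR k * ind (max_card_eq n X k) w) n <= c0 + SF (LX X c0 N n) w).
      { apply sum_bound.
        - intros k k'; apply (eq_unique n X w Gw).
        - intros k Hk [[A [[HA Hin] [HL' Hs]]] _].
          assert (Hp : forall i, In i A -> 0 < X i w) by (intros i Hi; apply Gw, Hin; auto).
          pose proof (len_bound X c0 N w HN ltac:(lra) A Hp).
          pose proof (sum_sub X c0 N w HN n A HA Hin).
          rewrite HL' in *. nra.
        - pose proof (SF_LX_nonneg X c0 N n w HN). lra. }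
      lra. }
    specialize (Hmain Hw). unfold L in Hmain. rewrite EP_app in Hmain.
    rewrite (EP_LM F P n X G n HP HX HG H0) in Hmain.
    rewrite (EP_LX F P n X G c0 N HP HU HG H0 HN Hc1 n (le_n n)) in Hmain.
    rewrite HPG in Hmain. unfold E, expected_max_card.
    assert (Hmn : Hm n = H).
    { unfold H. destruct n as [|n']; [lia|]. rewrite harmonic_Hm; auto. }
    rewrite Hmn in Hmain. lra. }
  apply Rnot_lt_le. intro Hlt.
  set (d := E - 2 * c0).
  assert (Hd : 0 < d) by (unfold d; lra).
  destruct (INR_unbounded (c0 / d)) as [N HN].
  assert (HN0 : (0 < N)%nat).
  { destruct N; [|lia]. simpl in HN. exfalso. assert (0 < c0 / d) by (apply Rdiv_lt_0_compat; lra). lra. }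
  assert (HN' : 0 < INR N) by (apply lt_0_INR; auto).
  specialize (Hbound N HN0).
  replace ((INR N + 1) / (2 * c0 * INR N) * H) with (c0 + c0 / INR N) in Hbound
    by (replace H with (2 * c0 * c0) by lra; field; split; lra).
  assert (c0 / INR N < d).
  { apply Rmult_lt_reg_r with (INR N); auto. unfold Rdiv. rewrite Rmult_assoc, Rinv_l, Rmult_1_r by lra.
    apply Rmult_gt_compat_r with (r := d) in HN; auto.
    replace (c0 / d * d) with c0 in HN by (field; lra). lra. }
  unfold d in *. lra.
Qed.
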